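(* Let $k$ have characteristic zero, $V$ have basis $x_1,\dots,x_n$ ($n\ge1$), $N\geq2$, $w$ a non-zero homogeneous potential of degree $N+1$, $A=A(w)$, $r_i=\partial_{x_i}(w)$, $R=\mathrm{span}\{r_i\}$. Fix $J\subset\{1,\dots,n\}$ with $(r_j)_{j\in J}$ a basis of $R$, dual basis $(r_j^* )_{j\in J}$ of $R^*$, and let $(x_i^* )$ be the dual basis of $V^*$. Consider the complex $C_w$: $$0\to A\otimes kc(w)\otimes A\xrightarrow{d_3}A\otimes R\otimes A\xrightarrow{d_2}A\otimes V\otimes A\xrightarrow{d_1}A\otimes A\to0$$ with $d_1(1\otimes v\otimes1)=v\otimes1-1\otimes v$, $d_2(1\otimes v_1\cdots v_N\otimes1)=\sum_{i}v_1\cdots v_{i-1}\otimes v_i\otimes v_{i+1}\cdots v_N$, $d_3(1\otimes c(w)\otimes1)=\sum_{i=1}^n x_i\otimes r_i\otimes1-1\otimes r_i\otimes x_i$; and the complex $C_w^\vee$: $$0\to A\otimes k1^*\otimes A\xrightarrow{d_1^*}A\otimes V^*\otimes A\xrightarrow{d_2^*}A\otimes R^*\otimes A\xrightarrow{d_3^*}A\otimes kc(w)^*\otimes A\to0$$ with $d_1^*(1^* )=\sum_i x_i\otimes x_i^*\otimes1-1\otimes x_i^*\otimes x_i$, $d_2^*(x_i^* )=\sum_{j\in J}\sum\big(\tfrac{\partial r_j}{\partial x_i}\big)_2\otimes r_j^*\otimes\big(\tfrac{\partial r_j}{\partial x_i}\big)_1$, and $d_3^*(r_i^* )=x_i\otimes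 c(w)^*\otimes1-1\otimes c(w)^*\otimes x_i+\sum_{j\notin J}r_i^*(r_j)\,(x_j\otimes c(w)^*\otimes1-1\otimes c(w)^*\otimes x_j)$ for $i\in J$. Define $A$-bimodule maps $f_0(1\otimes1)=c(w)^*$, $f_1(x_i)=r_i^*$ if $i\in J$ and $0$ if $i\notin J$, $f_2(r_i)=x_i^*$ ($i\in J$), $f_3(c(w))=1^*$, forming a diagram $f_3:A c(w)A\to A1^*A$, $f_2:ARA\to AV^*A$, $f_1:AVA\to AR^*A$, $f_0:AA\to Ac(w)^*A$. Then: (i) $f_1\circ d_2=d_2^*\circ f_2$; (ii) $f_2\circ d_3=d_1^*\circ f_3$ holds if and only if $\dim R=n$, and $f_0\circ d_1=d_3^*\circ f_1$ holds if and only if $\dim R=n$; (iii) if $C_w^\vee$ is exact at $A\otimes V^*\otimes A$ (equivalently $\mathrm{H}^1(A,A\otimes A)=0$ with outer bimodule structure), then $\dim R=n$.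
   Context: All tensor products are over $k$; elements $a\otimes v\otimes b$ of $A\otimes V\otimes A$ etc.; bimodule maps are determined by their values on $1\otimes(\cdot)\otimes 1$, written without the outer $1$'s. Cyclic derivative $\partial_x(p)=\sum_{p=uxv}vu$ and cyclic sum $c(a_1\cdots a_r)=\sum_i a_i\cdots a_ra_1\cdots a_{i-1}$ on monomials. The ordinary partial derivative $\frac{\partial}{\partial x}:T(V)\to T(V)\otimes T(V)$ is $\frac{\partial p}{\partial x}=\sum_{p=uxv}u\otimes v$ on monomials, written symbolically $\sum\big(\frac{\partial p}{\partial x}\big)_1\otimes\big(\frac{\partial p}{\partial x}\big)_2$ (images taken in $A\otimes A$). $A(w)=T(V)/(\partial_{x_1}w,\dots,\partial_{x_n}w)$. The complex $C_w^\vee$ is the image of $\mathrm{Hom}_{A\text{-}A}(C_w,A\otimes A)$ (outer bimodule structure on $A\otimes A$, resulting bimodule structure from the inner one, with Koszul sign convention) under the natural isomorphisms $\mathrm{Hom}_{A\text{-}A}(A\otimes F\otimes A,A\otimes A)\cong A\otimes F^*\otimes A$. *)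

(* Defs.v *)
From HB Require Import structures.
From mathcomp Require Import all_boot all_order all_algebra.
Set Implicit Arguments. Unset Strict Implicit. Unset Printing Implicit Defensive.
Import Order.TTheory GRing.Theory Num.Theory.
Local Open Scope ring_scope.

Section Defs.
Variables (k : fieldType) (n : nat).

(* words in x_1..x_n = monomials of T(V) *)
Definition word := seq 'I_n.

(* elements of T(V) as formal finite linear combinations of words *)
Definition nc := seq (k * word).

Definition ncoef (p : nc) (u : word) : k := \sum_(t <- p | t.2 == u) t.1.
Definition nceq (p q : nc) : Prop := forall u, ncoef p u = ncoef q u.
Definition ncw (u : word) : nc := [:: (1, u)].
Definition ncone : nc := ncw [::].
Definition ncX (i : 'I_n) : nc := ncw [:: i].
Definition ncmul (p q : nc) : nc := [seq (a.1 * b.1, a.2 ++ b.2) | a <- p, b <- q].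
Definition ncscale (c : k) (p : nc) : nc := [seq (c * a.1, a.2) | a <- p].

Definition homog (p : nc) (d : nat) : Prop :=
  forall u, size u != d -> ncoef p u = 0.

(* cyclic derivative: d_x(u x v) = v u *)
Definition cdiff (i : 'I_n) (p : nc) : nc :=
  flatten [seq [seq (a.1, drop j.+1 a.2 ++ take j a.2)
               | j <- iota 0 (size a.2) & nth i a.2 j == i] | a <- p].

(* ordinary partial derivative d p / d x_i = sum_{p = u x v} u (x) v *)
Definition pdiff (i : 'I_n) (p : nc) : seq (k * (word * word)) :=
  flatten [seq [seq (a.1, (take j a.2, drop j.+1 a.2))
               | j <- iota 0 (size a.2) & nth i a.2 j == i] | a <- p].

(* elements of T(V) (x) F (x) T(V), F having basis indexed by B *)
Definition tns (B : Type) := seq (k * (word * B * word)).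

Definition tcoef (B : eqType) (t : tns B) (x : word * B * word) : k :=
  \sum_(s <- t | s.2 == x) s.1.
Definition teq (B : eqType) (t1 t2 : tns B) : Prop :=
  forall x, tcoef t1 x = tcoef t2 x.
Definition tscale (B : Type) (c : k) (t : tns B) : tns B :=
  [seq (c * s.1, s.2) | s <- t].
Definition tlmul (B : Type) (u : word) (t : tns B) : tns B :=
  [seq (s.1, (u ++ s.2.1.1, s.2.1.2, s.2.2)) | s <- t].
Definition trmul (B : Type) (t : tns B) (v : word) : tns B :=
  [seq (s.1, (s.2.1.1, s.2.1.2, s.2.2 ++ v)) | s <- t].
Definition tsimp (B : Type) (p : nc) (b : B) (q : nc) : tns B :=
  [seq (a.1 * c.1, (a.2, b, c.2)) | a <- p, c <- q].

(* the bimodule map determined by its values phi b on the generators 1(x)b(x)1 *)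
Definition ext (B B' : Type) (phi : B -> tns B') (t : tns B) : tns B' :=
  flatten [seq tscale s.1 (tlmul s.2.1.1 (trmul (phi s.2.1.2) s.2.2)) | s <- t].

Variable w : nc.

Definition rel (i : 'I_n) : nc := cdiff i w.

(* generators of the kernel of T(V)(x)F(x)T(V) -> A(x)F(x)A,
   i.e. of I(x)F(x)T + T(x)F(x)I with I = (r_1,...,r_n) *)
Definition genK (B : Type) (g : k * 'I_n * word * word * B * word * bool) : tns B :=
  let: (c, i, u, v, b, z, s) := g in
  let m := ncmul (ncmul (ncw u) (rel i)) (ncw v) in
  tscale c (if s then tsimp m b (ncw z) else tsimp (ncw z) b m).

(* t represents 0 in A(w) (x) F (x) A(w) *)
Definition zeroA (B : eqType) (t : tns B) : Prop :=
  exists L : seq (k * 'I_n * word * word * B * word * bool),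
    teq t (flatten [seq genK g | g <- L]).

Definition eqA (B : eqType) (t1 t2 : tns B) : Prop :=
  zeroA (t1 ++ tscale (-1) t2).

Variable J : {set 'I_n}.
(* index type of the basis (r_j)_{j in J} of R (and of the dual basis of R^* ) *)
Definition Jt := {j : 'I_n | j \in J}.

Definition rspan (coord : 'I_n -> Jt -> k) : Prop :=
  forall i, nceq (rel i) (flatten [seq ncscale (coord i l) (rel (val l)) | l : Jt]).
Definition rindep : Prop :=
  forall lam : Jt -> k,
    nceq (flatten [seq ncscale (lam l) (rel (val l)) | l : Jt]) [::] ->
    forall l, lam l = 0.

Variable coord : 'I_n -> Jt -> k.

Definition comm (B : Type) (i : 'I_n) (b : B) : tns B :=
  tsimp (ncX i) b ncone ++ tscale (-1) (tsimp ncone b (ncX i)).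

(* complex C_w ; generators: A(x)A ~ unit, V ~ 'I_n, R ~ Jt, kc(w) ~ unit *)
Definition d1 (i : 'I_n) : tns unit := comm i tt.
Definition d2 (l : Jt) : tns 'I_n :=
  flatten [seq [seq (a.1, (a.2.1, i, a.2.2)) | a <- pdiff i (rel (val l))] | i : 'I_n].
Definition d3 (_ : unit) : tns Jt :=
  flatten [seq flatten [seq tscale (coord i l) (comm i l) | l : Jt] | i : 'I_n].

(* complex C_w^vee ; generators: 1^* ~ unit, V^* ~ 'I_n, R^* ~ Jt, c(w)^* ~ unit *)
Definition d1s (_ : unit) : tns 'I_n := flatten [seq comm i i | i : 'I_n].
Definition d2s (i : 'I_n) : tns Jt :=
  flatten [seq [seq (a.1, (a.2.2, l, a.2.1)) | a <- pdiff i (rel (val l))] | l : Jt].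
(* r_i^*(r_j) = coord j i *)
Definition d3s (l : Jt) : tns unit :=
  comm (val l) tt ++
  flatten [seq tscale (coord j l) (comm j tt) | j <- enum 'I_n & j \notin J].

Definition f0 (_ : unit) : tns unit := tsimp ncone tt ncone.
Definition f1 (i : 'I_n) : tns Jt :=
  match insub i : option Jt with Some l => tsimp ncone l ncone | None => [::] end.
Definition f2 (l : Jt) : tns 'I_n := tsimp ncone (val l) ncone.
Definition f3 (_ : unit) : tns unit := tsimp ncone tt ncone.

End Defs.

(* Main.v *)
Require Import Defs.
From HB Require Import structures.
From mathcomp Require Import all_boot all_order all_algebra.
From mathcomp Require Import zify ring.
Set Implicit Arguments. Unset Strict Implicit. Unset Printing Implicit Defensive.
Import Order.TTheory GRing.Theory Num.Theory.
Local Open Scope ring_scope.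

Definition Gf (k : fieldType) (X : Type) (g : X -> k) (s : seq (k * X)) : k :=
  \sum_(a <- s) a.1 * g a.2.
Definition gc (k : fieldType) (X : eqType) (s : seq (k * X)) (x : X) : k :=
  \sum_(a <- s | a.2 == x) a.1.

Lemma Gf_cat (k : fieldType) (X : Type) (g : X -> k) s1 s2 :
  Gf g (s1 ++ s2) = Gf g s1 + Gf g s2.
Proof. by rewrite /Gf big_cat. Qed.

Lemma Gf_nil (k : fieldType) (X : Type) (g : X -> k) : Gf g [::] = 0.
Proof. by rewrite /Gf big_nil. Qed.

Lemma Gf_seq1 (k : fieldType) (X : Type) (g : X -> k) c x :
  Gf g [:: (c, x)] = c * g x.
Proof. by rewrite /Gf big_seq1. Qed.

Lemma Gf_flatten (k : fieldType) (X : Type) (g : X -> k) (ss : seq (seq (k * X))) :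
  Gf g (flatten ss) = \sum_(s <- ss) Gf g s.
Proof. by rewrite /Gf big_flatten. Qed.

Lemma Gf_map (k : fieldType) (X Y : Type) (g : X -> k) (f : Y -> k * X) (s : seq Y) :
  Gf g (map f s) = \sum_(y <- s) (f y).1 * g (f y).2.
Proof. by rewrite /Gf big_map. Qed.

Lemma Gf_eq (k : fieldType) (X : Type) (g1 g2 : X -> k) s :
  (forall x, g1 x = g2 x) -> Gf g1 s = Gf g2 s.
Proof. by move=> H; rewrite /Gf; apply: eq_bigr => a _; rewrite H. Qed.

Lemma gcE (k : fieldType) (X : eqType) (s : seq (k * X)) x :
  gc s x = Gf (fun y => (y == x)%:R) s.
Proof.
rewrite /gc /Gf big_mkcond; apply: eq_bigr => a _.
by case: eqP => _; rewrite ?mulr1 ?mulr0.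
Qed.

Lemma sum_uniq1 (k : fieldType) (X : eqType) (s : seq X) (x : X) (F : X -> k) :
  uniq s -> x \in s -> \sum_(y <- s) (if x == y then F y else 0) = F x.
Proof.
elim: s => [|y s IH] //= /andP [ny us]; rewrite in_cons big_cons => /orP [/eqP xy|xs].
  rewrite -xy eqxx big1_seq ?addr0 // => z /andP [_ zs]; case: eqP => // xz.
  by rewrite -xy xz zs in ny.
have nxy : x != y by apply: contraNneq ny => <-.
by rewrite (negPf nxy) add0r IH.
Qed.

Lemma Gf_regroup (k : fieldType) (X : eqType) (g : X -> k) (s : seq (k * X)) (r : seq X) :
  uniq r -> {subset map snd s <= r} ->
  Gf g s = \sum_(x <- r) g x * gc s x.
Proof.
move=> ur sub.
under eq_bigr do rewrite gcE /Gf mulr_sumr.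
rewrite exchange_big /Gf; apply: eq_big_seq => a as_.
have ar : a.2 \in r by apply: sub; apply: map_f.
rewrite -(sum_uniq1 (fun y => a.1 * g y) ur ar); apply: eq_bigr => y _.
rewrite eq_sym; case: eqP => [->|_]; rewrite ?mulr1 ?mulr0 //; ring.
Qed.

Lemma Gf_gc (k : fieldType) (X : eqType) (g : X -> k) (s1 s2 : seq (k * X)) :
  (forall x, gc s1 x = gc s2 x) -> Gf g s1 = Gf g s2.
Proof.
move=> H; set r := undup (map snd (s1 ++ s2)).
have ur : uniq r by apply: undup_uniq.
rewrite (@Gf_regroup _ _ g s1 r) // ?(@Gf_regroup _ _ g s2 r) //.
- by apply: eq_bigr => x _; rewrite H.
- by move=> x xs; rewrite mem_undup map_cat mem_cat xs orbT.
- by move=> x xs; rewrite mem_undup map_cat mem_cat xs.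
Qed.

Lemma Gf_tscale (k : fieldType) n (B : Type) (g : word n * B * word n -> k) c (t : tns k n B) :
  Gf g (tscale c t) = c * Gf g t.
Proof. by rewrite /tscale Gf_map /Gf mulr_sumr; apply: eq_bigr => s _ /=; rewrite mulrA. Qed.

Lemma Gf_tlmul (k : fieldType) n (B : Type) (g : word n * B * word n -> k) u (t : tns k n B) :
  Gf g (tlmul u t) = Gf (fun s => g (u ++ s.1.1, s.1.2, s.2)) t.
Proof. by rewrite /tlmul Gf_map. Qed.

Lemma Gf_trmul (k : fieldType) n (B : Type) (g : word n * B * word n -> k) v (t : tns k n B) :
  Gf g (trmul t v) = Gf (fun s => g (s.1.1, s.1.2, s.2 ++ v)) t.
Proof. by rewrite /trmul Gf_map. Qed.

Lemma Gf_ext (k : fieldType) n (B B' : Type) (g : word n * B' * word n -> k)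
   (phi : B -> tns k n B') (t : tns k n B) :
  Gf g (ext phi t) =
  Gf (fun s => Gf (fun s' => g (s.1.1 ++ s'.1.1, s'.1.2, s'.2 ++ s.2)) (phi s.1.2)) t.
Proof.
rewrite /ext Gf_flatten big_map /Gf; apply: eq_bigr => s _.
by rewrite -/(Gf _ _) Gf_tscale Gf_tlmul Gf_trmul.
Qed.

Lemma Gf_tsimp (k : fieldType) n (B : Type) (g : word n * B * word n -> k) p b q :
  Gf g (@tsimp k n B p b q) = \sum_(a <- p) \sum_(c <- q) a.1 * c.1 * g (a.2, b, c.2).
Proof.
rewrite /tsimp /Gf /allpairs big_flatten big_map; apply: eq_bigr => a _.
by rewrite big_map.
Qed.

Lemma Gf_unit (k : fieldType) n (B : Type) (g : word n * B * word n -> k) b :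
  Gf g (@tsimp k n B (ncone k n) b (ncone k n)) = g ([::], b, [::]).
Proof. by rewrite Gf_tsimp /ncone /ncw !big_seq1 /= !mul1r. Qed.

Lemma Gf_comm (k : fieldType) n (B : Type) (g : word n * B * word n -> k) i b :
  Gf g (@comm k n B i b) = g ([:: i], b, [::]) - g ([::], b, [:: i]).
Proof.
rewrite /comm Gf_cat Gf_tscale !Gf_tsimp /ncX /ncone /ncw !big_seq1 /= !mul1r.
by rewrite mulN1r.
Qed.

Lemma Gf_ext_eq (k : fieldType) n (B B' : Type) (g : word n * B' * word n -> k)
   (phi psi : B -> tns k n B') (t : tns k n B) :
  (forall b g', Gf g' (phi b) = Gf g' (psi b)) ->
  Gf g (ext phi t) = Gf g (ext psi t).
Proof. by move=> H; rewrite !Gf_ext; apply: Gf_eq => s; rewrite H. Qed.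

Lemma teq_Gf (k : fieldType) n (B : eqType) (t1 t2 : tns k n B) :
  teq t1 t2 -> forall g, Gf g t1 = Gf g t2.
Proof. by move=> H g; apply: Gf_gc => x; apply: H. Qed.

Lemma Gf_teq (k : fieldType) n (B : eqType) (t1 t2 : tns k n B) :
  (forall g, Gf g t1 = Gf g t2) -> teq t1 t2.
Proof. by move=> H x; change (gc t1 x = gc t2 x); rewrite !gcE H. Qed.

Lemma eqA_Gf (k : fieldType) n (w : nc k n) (B : eqType) (t1 t2 : tns k n B) :
  (forall g, Gf g t1 = Gf g t2) -> eqA w t1 t2.
Proof.
move=> H; exists [::]; apply: Gf_teq => g /=.
by rewrite Gf_cat Gf_tscale H Gf_nil mulN1r subrr.
Qed.

Lemma zeroA_Gf (k : fieldType) n (w : nc k n) (B : eqType) (t : tns k n B) g :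
  zeroA w t -> (forall gg, Gf g (genK w gg) = 0) -> Gf g t = 0.
Proof.
case=> L /teq_Gf -> H; rewrite Gf_flatten big_map big1 // => gg _; exact: H.
Qed.

Lemma Gf_ncmul (k : fieldType) n (h : word n -> k) (p q : nc k n) :
  Gf h (ncmul p q) = \sum_(a <- p) \sum_(b <- q) a.1 * b.1 * h (a.2 ++ b.2).
Proof.
rewrite /ncmul /Gf /allpairs big_flatten big_map; apply: eq_bigr => a _.
by rewrite big_map.
Qed.

Lemma Gf_sandwich (k : fieldType) n (h : word n -> k) u (r : nc k n) v :
  Gf h (ncmul (ncmul (ncw k u) r) (ncw k v)) = Gf (fun y => h (u ++ y ++ v)) r.
Proof.
rewrite Gf_ncmul; under eq_bigr do rewrite /ncw big_seq1 /= mulr1.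
rewrite -/(Gf (fun x => h (x ++ v)) _) Gf_ncmul big_seq1 /Gf.
by apply: eq_bigr => b _ /=; rewrite mul1r catA.
Qed.

Lemma Gf_ncscale (k : fieldType) n (h : word n -> k) c (p : nc k n) :
  Gf h (ncscale c p) = c * Gf h p.
Proof. by rewrite /ncscale Gf_map /Gf mulr_sumr; apply: eq_bigr => s _ /=; rewrite mulrA. Qed.

Lemma Gf_cdiff (k : fieldType) n (h : word n -> k) i (p : nc k n) :
  Gf h (cdiff i p) = Gf (fun y => \sum_(j <- iota 0 (size y) | nth i y j == i)
                                    h (drop j.+1 y ++ take j y)) p.
Proof.
rewrite /cdiff Gf_flatten big_map /Gf; apply: eq_bigr => a _.
by rewrite big_map big_filter mulr_sumr.
Qed.

Lemma Gf_pdiff (k : fieldType) n (h : word n * word n -> k) i (p : nc k n) :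
  Gf h (pdiff i p) = Gf (fun y => \sum_(j <- iota 0 (size y) | nth i y j == i)
                                    h (take j y, drop j.+1 y)) p.
Proof.
rewrite /pdiff Gf_flatten big_map /Gf; apply: eq_bigr => a _.
by rewrite big_map big_filter mulr_sumr.
Qed.

Lemma Gf_homog (k : fieldType) n (w : nc k n) d (G : word n -> k) :
  homog w d -> (forall y, size y = d -> G y = 0) -> Gf G w = 0.
Proof.
move=> hw HG; rewrite (@Gf_regroup _ _ G w (undup (map snd w))) ?undup_uniq //; last first.
  by move=> x; rewrite mem_undup.
rewrite big1 // => y _; case: (eqVneq (size y) d) => [/HG ->|/hw]; first by rewrite mul0r.
by move=> H; rewrite /gc -/(ncoef _ _) H mulr0.
Qed.

Lemma Gf_rel_kill (k : fieldType) n (w : nc k n) N i (H : word n -> k) :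
  homog w N.+1 -> (forall y, size y = N -> H y = 0) -> Gf H (Defs.rel w i) = 0.
Proof.
move=> hw HH; rewrite /Defs.rel Gf_cdiff; apply: (Gf_homog hw) => y sy.
rewrite big_seq_cond big1 // => j /andP [jy _]; apply: HH.
have jy' : (j < size y)%N by rewrite mem_iota add0n in jy.
rewrite size_cat size_drop size_take jy'; lia.
Qed.

Lemma genK_kill (k : fieldType) n (w : nc k n) N (B : Type) (g : word n * B * word n -> k) gg :
  homog w N.+1 -> (2 <= N)%N ->
  (forall x b y, (2 <= size x)%N || (2 <= size y)%N -> g (x, b, y) = 0) ->
  Gf g (genK w gg) = 0.
Proof.
move=> hw N2 Hg; case: gg => [[[[[[c i] u] v] b] z] s] /=.
rewrite Gf_tscale; apply/eqP; rewrite mulf_eq0; apply/orP; right; apply/eqP.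
case: s; rewrite Gf_tsimp.
- rewrite /ncw; under eq_bigr do rewrite big_seq1 /= mulr1.
  rewrite -/(Gf (fun x => g (x, b, z)) _) Gf_sandwich (Gf_rel_kill _ hw) // => y sy.
  by apply: Hg; rewrite !size_cat sy; apply/orP; left; lia.
- rewrite /ncw big_seq1 /=.
  have -> : forall (m : nc k n), \sum_(c0 <- m) 1 * c0.1 * g (z, b, c0.2) = Gf (fun x => g (z, b, x)) m.
    by move=> m; rewrite /Gf; apply: eq_bigr => a _; rewrite mul1r.
  rewrite Gf_sandwich (Gf_rel_kill _ hw) // => y sy.
  by apply: Hg; rewrite !size_cat sy; apply/orP; right; lia.
Qed.

Definition zrot (T : Type) (y : seq T) (p : nat) := drop p.+1 y ++ take p y.

Lemma rot_cons (T : Type) (x0 : T) (y : seq T) p :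
  (p < size y)%N -> rot p y = nth x0 y p :: zrot y p.
Proof. by move=> py; rewrite /rot (drop_nth x0 py). Qed.

Lemma size_zrot (T : Type) (y : seq T) p : (p < size y)%N -> size (zrot y p) = (size y).-1.
Proof. move=> py; rewrite size_cat size_drop size_take py; lia. Qed.

Lemma rot_step (T : Type) (x0 : T) (y : seq T) m' p q :
  size y = m'.+1 -> (p < m'.+1)%N -> (q < m')%N ->
  rot ((p + q + 1) %% m'.+1) y =
  nth x0 (zrot y p) q :: (drop q.+1 (zrot y p) ++ nth x0 y p :: take q (zrot y p)).
Proof.
move=> sy pm qm.
have szp : size (zrot y p) = m' by rewrite size_zrot sy.
have -> : rot ((p + q + 1) %% m'.+1) y = rot q.+1 (rot p y).
  rewrite rot_add_mod; try (rewrite sy; lia).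
  rewrite sy; case: ifP => H.
    case: (ltnP (q.+1 + p) m'.+1) => H2.
      by rewrite modn_small; [congr rot; lia | lia].
    have -> : (q.+1 + p = m'.+1)%N by lia.
    have -> : (p + q + 1 = m'.+1)%N by lia.
    by rewrite modnn rot0 -sy rot_size.
  have -> : (p + q + 1 = (q.+1 + p - m'.+1) + m'.+1)%N by lia.
  by rewrite modnDr modn_small //; lia.
rewrite [rot p y](rot_cons x0) ?sy // /rot /=.
by rewrite (drop_nth x0) ?szp.
Qed.

Lemma sg_lt m' (q : 'I_m') : (m' - q.+1 < m')%N.
Proof. case: q => q /= Hq; lia. Qed.

Definition sg m' (pq : 'I_m'.+1 * 'I_m') : 'I_m'.+1 * 'I_m' :=
  (Ordinal (ltn_pmod (pq.1 + pq.2 + 1) (ltn0Sn m')), Ordinal (sg_lt pq.2)).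

Lemma sgK m' : involutive (@sg m').
Proof.
case=> p q; rewrite /sg /=; congr pair; apply: val_inj => /=.
  rewrite -(addnA ((p + q + 1)%N %% m'.+1)%N) modnDml.
  have -> : (p + q + 1 + (m' - q.+1 + 1) = p + m'.+1)%N by case: q => q /= Hq; lia.
  by rewrite modnDr modn_small.
case: q => q /= Hq; lia.
Qed.

Definition Kl (k : fieldType) n (i j : 'I_n) (h : word n -> word n -> k) (y : word n) : k :=
  \sum_(p <- iota 0 (size y) | nth j y p == j)
    \sum_(q <- iota 0 (size (zrot y p)) | nth i (zrot y p) q == i)
       h (take q (zrot y p)) (drop q.+1 (zrot y p)).

Lemma iota_sum (k : fieldType) m (P : pred nat) (F : nat -> k) :
  \sum_(p <- iota 0 m | P p) F p = \sum_(p < m) (if P p then F p else 0).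
Proof. by rewrite big_mkcond -{1}(subn0 m) -/(index_iota 0 m) big_mkord. Qed.

Lemma Kl_ord (k : fieldType) n (i j : 'I_n) (h : word n -> word n -> k) (y : word n) m' (d : 'I_n) :
  size y = m'.+1 ->
  Kl i j h y = \sum_(p < m'.+1) \sum_(q < m')
     (if (nth d y p == j) && (nth d (zrot y p) q == i)
      then h (take q (zrot y p)) (drop q.+1 (zrot y p)) else 0).
Proof.
move=> sy; rewrite /Kl iota_sum sy; apply: eq_bigr => p _.
have py : (p < size y)%N by rewrite sy.
rewrite (set_nth_default d j py); case: eqP => _ /=; last by rewrite big1.
rewrite iota_sum size_zrot // sy /=; apply: eq_bigr => q _.
by rewrite (set_nth_default d i) // size_zrot // sy.
Qed.

Lemma Kl_sym (k : fieldType) n (i j : 'I_n) (h : word n -> word n -> k) (y : word n) :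
  Kl i j h y = Kl j i (fun u v => h v u) y.
Proof.
case sy: (size y) => [|m'].
  by rewrite /Kl sy !big_nil.
rewrite !(Kl_ord _ _ _ i sy) !pair_big /=.
rewrite (reindex_inj (inv_inj (@sgK m'))) /=; apply: eq_bigr => [[p q]] _ /=.
have pm := ltn_ord p; have qm := ltn_ord q.
have := rot_step i sy pm qm.
have p'y : ((p + q + 1) %% m'.+1 < size y)%N by rewrite sy ltn_pmod.
rewrite (rot_cons i p'y) => -[E1 E2] /=.
rewrite E1 E2.
have szp : size (zrot y p) = m' by rewrite size_zrot // sy.
have sd : size (drop q.+1 (zrot y p)) = (m' - q.+1)%N by rewrite size_drop szp.
rewrite nth_cat sd ltnn subnn /= take_size_cat // drop_cat sd.
have -> : ((m' - q.+1).+1 < m' - q.+1)%N = false by lia.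
rewrite subSnn /= drop0.
by rewrite andbC.
Qed.

Lemma Gf_image (k : fieldType) (X : Type) (I : finType) (g : X -> k) (F : I -> seq (k * X)) :
  Gf g (flatten [seq F i | i : I]) = \sum_(i : I) Gf g (F i).
Proof. by rewrite Gf_flatten big_image; apply: eq_bigl => i. Qed.

Lemma sum_Jt (k : fieldType) n (J : {set 'I_n}) (F : 'I_n -> k) :
  \sum_(l : Jt J) F (val l) = \sum_(i in J) F i.
Proof. by rewrite [RHS]big_sub. Qed.

Lemma Gf_pdiff_rel (k : fieldType) n (w : nc k n) i j (h : word n -> word n -> k) :
  Gf (fun x => h x.1 x.2) (pdiff i (Defs.rel w j)) = Gf (Kl i j h) w.
Proof. by rewrite Gf_pdiff /Defs.rel Gf_cdiff. Qed.

Lemma pdiff_sym (k : fieldType) n (w : nc k n) i j (h : word n -> word n -> k) :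
  Gf (fun x => h x.1 x.2) (pdiff i (Defs.rel w j)) =
  Gf (fun x => h x.2 x.1) (pdiff j (Defs.rel w i)).
Proof.
rewrite Gf_pdiff_rel (Gf_eq _ (Kl_sym i j h)).
by rewrite -(Gf_pdiff_rel w j i (fun u v => h v u)).
Qed.

Lemma ext_comp (k : fieldType) n (B1 B2 B3 : Type) (g : word n * B3 * word n -> k)
   (phi : B2 -> tns k n B3) (psi : B1 -> tns k n B2) (t : tns k n B1) :
  Gf g (ext phi (ext psi t)) = Gf g (ext (fun b => ext phi (psi b)) t).
Proof.
rewrite !Gf_ext; apply: Gf_eq => s; rewrite Gf_ext; apply: Gf_eq => s'.
by apply: Gf_eq => s'' /=; rewrite !catA.
Qed.

Lemma Gf_f1 (k : fieldType) n (J : {set 'I_n}) (g : word n * Jt J * word n -> k) i :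
  Gf g (f1 k J i) = match insub i with Some l => g ([::], l, [::]) | None => 0 end.
Proof. by rewrite /f1; case: insub => [l|]; rewrite ?Gf_unit ?Gf_nil. Qed.

Lemma part_i (k : fieldType) n (w : nc k n) (J : {set 'I_n}) (t : tns k n (Jt J)) :
  eqA w (ext (@f1 k n J) (ext (@d2 k n w J) t)) (ext (@d2s k n w J) (ext (@f2 k n J) t)).
Proof.
apply: eqA_Gf => g; rewrite !ext_comp; apply: Gf_ext_eq => b g'.
rewrite [RHS]Gf_ext /f2 Gf_unit /=.
transitivity (Gf g' (d2s w J (val b))); last by apply: Gf_eq => -[[x b0] y]; rewrite cats0.
rewrite Gf_ext /d2 /d2s !Gf_image.
transitivity (\sum_(i in J) Gf (fun x => match insub i with Some l => g' (x.1, l, x.2) | None => 0 end)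
                (pdiff i (Defs.rel w (val b)))).
  rewrite [RHS]big_mkcond /=; apply: eq_bigr => i _.
  rewrite Gf_map; case: ifP => iJ.
    apply: eq_bigr => a _ /=; rewrite Gf_f1 /=.
    by case: insub => [l|] //=; rewrite cats0.
  by rewrite big1 // => a _ /=; rewrite Gf_f1 insubN ?iJ //= mulr0.
rewrite [LHS]big_sub /=; apply: eq_bigr => l _.
rewrite Gf_map -/(Gf (fun x => g' (x.2, l, x.1)) _).
rewrite (pdiff_sym w (val b) (val l) (fun u v => g' (v, l, u))) /=.
by apply: Gf_eq => x; rewrite valK.
Qed.

Lemma Gf_ext_unit (k : fieldType) n (B B' : Type) (g : word n * B' * word n -> k)
   (phi : B -> tns k n B') b :
  Gf g (ext phi (tsimp (ncone k n) b (ncone k n))) = Gf g (phi b).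
Proof. by rewrite Gf_ext Gf_unit /=; apply: Gf_eq => -[[x b0] y]; rewrite cats0. Qed.

Lemma Gf_f2d3 (k : fieldType) n (J : {set 'I_n}) (coord : 'I_n -> Jt J -> k)
   (g : word n * 'I_n * word n -> k) :
  Gf g (ext (@f2 k n J) (d3 coord tt)) =
  \sum_(i : 'I_n) \sum_(l : Jt J) coord i l * (g ([:: i], val l, [::]) - g ([::], val l, [:: i])).
Proof.
rewrite Gf_ext /d3 Gf_image; apply: eq_bigr => i _; rewrite Gf_image.
by apply: eq_bigr => l _; rewrite Gf_tscale Gf_comm /f2 !Gf_unit /=.
Qed.

Lemma Gf_d1s (k : fieldType) n (g : word n * 'I_n * word n -> k) :
  Gf g (@d1s k n tt) =
  \sum_(i : 'I_n) (g ([:: i], i, [::]) - g ([::], i, [:: i])).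
Proof.
rewrite /d1s Gf_image; apply: eq_bigr => i _.
by rewrite Gf_comm.
Qed.

Lemma sum_delta (k : fieldType) n (J : {set 'I_n}) (X : 'I_n -> k) i :
  i \in J -> \sum_(l : Jt J) (val l == i)%:R * X (val l) = X i.
Proof.
move=> iJ; rewrite (sum_Jt J (fun j => (j == i)%:R * X j)).
rewrite (bigD1 i) //= eqxx mul1r big1 ?addr0 // => j /andP [_ /negPf ->].
by rewrite mul0r.
Qed.

Lemma nceq_Gf (k : fieldType) n (p q : nc k n) h : nceq p q -> Gf h p = Gf h q.
Proof. by move=> H; apply: Gf_gc => u; apply: H. Qed.

Lemma coord_delta (k : fieldType) n (w : nc k n) (J : {set 'I_n}) (coord : 'I_n -> Jt J -> k) :
  rspan w coord -> rindep w J ->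
  forall i, i \in J -> forall l : Jt J, coord i l = (val l == i)%:R.
Proof.
move=> hs hi i iJ l; apply/eqP; rewrite -subr_eq0; apply/eqP.
move: l; apply: hi => u.
change (gc (flatten [seq ncscale (coord i l - (val l == i)%:R) (Defs.rel w (val l)) | l : Jt J]) u = gc [::] u).
rewrite !gcE Gf_nil Gf_image.
under eq_bigr do rewrite Gf_ncscale mulrBl.
rewrite big_split /= sumrN.
have E : Gf (fun y => (y == u)%:R) (Defs.rel w i) =
   \sum_(l : Jt J) coord i l * Gf (fun y => (y == u)%:R) (Defs.rel w (val l)).
  by rewrite (nceq_Gf _ (hs i)) Gf_image; apply: eq_bigr => l _; rewrite Gf_ncscale.
rewrite -E.
rewrite (@sum_delta k n J (fun j => Gf (fun y => (y == u)%:R) (Defs.rel w j)) i iJ).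
by rewrite subrr.
Qed.

Lemma setT_of_card n (J : {set 'I_n}) : #|J| = n -> forall i, i \in J.
Proof.
move=> cJ i.
have : J = setT by apply/eqP; rewrite eqEcard subsetT cardsT card_ord cJ leqnn.
by move=> ->; rewrite inE.
Qed.

Lemma notin_of_card n (J : {set 'I_n}) : #|J| <> n -> exists j, j \notin J.
Proof.
move=> cJ; case: (pickP (fun j => j \notin J)) => [j Hj|H]; first by exists j.
exfalso; apply: cJ; have -> : J = setT.
  by apply/setP => j; rewrite inE; move: (H j) => /= /negbFE.
by rewrite cardsT card_ord.
Qed.

Lemma Gf0 (k : fieldType) (X : Type) (s : seq (k * X)) : Gf (fun _ => 0) s = 0.
Proof. by rewrite /Gf big1 // => a _; rewrite mulr0. Qed.

Lemma kill_lem (k : fieldType) n (B : eqType) (x0 y0 : word n) (b0 : B) :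
  (size x0 < 2)%N -> (size y0 < 2)%N ->
  forall x b y, (2 <= size x)%N || (2 <= size y)%N ->
    (if (x == x0) && (b == b0) && (y == y0) then 1 else 0 : k) = 0.
Proof.
move=> sx sy x b y H; case: ifP => // /andP [/andP [/eqP ex _] /eqP ey].
exfalso; move: H; rewrite ex ey => /orP [] H.
  by have := leq_ltn_trans H sx; rewrite ltnn.
by have := leq_ltn_trans H sy; rewrite ltnn.
Qed.

Lemma part_iia (k : fieldType) n N (w : nc k n) (J : {set 'I_n}) (coord : 'I_n -> Jt J -> k) :
  homog w N.+1 -> (2 <= N)%N -> rspan w coord -> rindep w J ->
  (forall t : tns k n unit,
     eqA w (ext (@f2 k n J) (ext (@d3 k n J coord) t)) (ext (@d1s k n) (ext (@f3 k n) t)))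
    <-> #|J| = n.
Proof.
move=> hw N2 hs hi; split.
- move=> H; case: (eqVneq #|J| n) => [//|/eqP cJ]; exfalso.
  have [j jJ] := notin_of_card cJ.
  pose G := fun s : word n * 'I_n * word n =>
    if (s.1.1 == [:: j]) && (s.1.2 == j) && (s.2 == [::]) then (1 : k) else 0.
  have Z := zeroA_Gf (g := G) (H (tsimp (ncone k n) tt (ncone k n)))
     (fun gg => genK_kill gg hw N2 (@kill_lem k n _ [:: j] [::] j is_true_true is_true_true)).
  move: Z; rewrite Gf_cat Gf_tscale !ext_comp !Gf_ext_unit Gf_f2d3. rewrite Gf_d1s.
  rewrite big1 ?add0r; last first.
    move=> i _; rewrite big1 // => l _.
    have lj : (val l == j) = false by apply/negP => /eqP e; rewrite -e (valP l) in jJ.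
    by rewrite /G /= lj andbF /= subrr mulr0.
  rewrite (bigD1 j) //= big1 ?addr0; last first.
    by move=> i /negPf ij; rewrite /G /= ij andbF /= subr0.
  by rewrite /G /= !eqxx /= subr0 mulN1r => /eqP; rewrite oppr_eq0 oner_eq0.
- move=> cJ t; have allJ := setT_of_card cJ; have cd := coord_delta hs hi.
  apply: eqA_Gf => g; rewrite !ext_comp; apply: Gf_ext_eq => -[] g'.
  rewrite Gf_f2d3 Gf_ext_unit Gf_d1s; apply: eq_bigr => i _.
  under eq_bigr do rewrite cd ?allJ //.
  exact: (@sum_delta k n J (fun j => g' ([:: i], j, [::]) - g' ([::], j, [:: i])) i (allJ i)).
Qed.

Lemma Gf_f0d1 (k : fieldType) n (g : word n * unit * word n -> k) i :
  Gf g (ext (@f0 k n) (@d1 k n i)) = g ([:: i], tt, [::]) - g ([::], tt, [:: i]).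
Proof. by rewrite Gf_ext /d1 Gf_comm /f0 !Gf_unit /=. Qed.

Lemma Gf_d3sf1 (k : fieldType) n (J : {set 'I_n}) (coord : 'I_n -> Jt J -> k)
   (g : word n * unit * word n -> k) i :
  Gf g (ext (d3s coord) (f1 k J i)) =
  match insub i with Some l => Gf g (d3s coord l) | None => 0 end.
Proof.
rewrite Gf_ext Gf_f1; case: insub => [l|] //=.
by apply: Gf_eq => -[[x b0] y]; rewrite cats0.
Qed.

Lemma part_iib (k : fieldType) n N (w : nc k n) (J : {set 'I_n}) (coord : 'I_n -> Jt J -> k) :
  homog w N.+1 -> (2 <= N)%N ->
  (forall t : tns k n 'I_n,
     eqA w (ext (@f0 k n) (ext (@d1 k n) t)) (ext (@d3s k n J coord) (ext (@f1 k n J) t)))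
    <-> #|J| = n.
Proof.
move=> hw N2; split.
- move=> H; case: (eqVneq #|J| n) => [//|/eqP cJ]; exfalso.
  have [j jJ] := notin_of_card cJ.
  pose G := fun s : word n * unit * word n =>
    if (s.1.1 == [:: j]) && (s.1.2 == tt) && (s.2 == [::]) then (1 : k) else 0.
  have Z := zeroA_Gf (g := G) (H (tsimp (ncone k n) j (ncone k n)))
     (fun gg => genK_kill gg hw N2 (@kill_lem k n _ [:: j] [::] tt is_true_true is_true_true)).
  move: Z; rewrite Gf_cat Gf_tscale !ext_comp !Gf_ext_unit Gf_f0d1 Gf_d3sf1 insubN //.
  by rewrite /G /= !eqxx /= mulr0 addr0 subr0 => /eqP; rewrite oner_eq0.
- move=> cJ t; have allJ := setT_of_card cJ.
  apply: eqA_Gf => g; rewrite !ext_comp; apply: Gf_ext_eq => i g'.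
  rewrite Gf_f0d1 Gf_d3sf1; case: insubP => [l _ vl|]; last by rewrite allJ.
  rewrite /d3s Gf_cat Gf_comm /= vl.
  rewrite Gf_flatten big_map big_filter big1 ?addr0 // => j.
  by rewrite allJ.
Qed.

Lemma Gf_d2s_lin (k : fieldType) n (w : nc k n) (J : {set 'I_n}) (coord : 'I_n -> Jt J -> k)
   (g : word n * Jt J * word n -> k) i0 :
  rspan w coord ->
  Gf g (d2s w J i0) = \sum_(l : Jt J) coord i0 l * Gf g (d2s w J (val l)).
Proof.
move=> hs.
pose P (m : Jt J) := fun y : word n => \sum_(j <- iota 0 (size y) | nth (val m) y j == val m)
                                    g (take j y, m, drop j.+1 y).
have E : forall b, Gf g (d2s w J b) = \sum_(m : Jt J) Gf (P m) (Defs.rel w b).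
  move=> b; rewrite /d2s Gf_image; apply: eq_bigr => m _.
  rewrite Gf_map -/(Gf (fun x => g (x.2, m, x.1)) _).
  rewrite (pdiff_sym w b (val m) (fun u v => g (v, m, u))) /=.
  by rewrite (Gf_pdiff (fun x => g (x.1, m, x.2))).
transitivity (\sum_(m : Jt J) \sum_(l : Jt J) coord i0 l * Gf (P m) (Defs.rel w (val l))).
  rewrite E; apply: eq_bigr => m _.
  rewrite (nceq_Gf _ (hs i0)) Gf_image; apply: eq_bigr => l _.
  by rewrite Gf_ncscale.
rewrite exchange_big; apply: eq_bigr => l _.
by rewrite E mulr_sumr.
Qed.

Lemma part_iii (k : fieldType) n N (w : nc k n) (J : {set 'I_n}) (coord : 'I_n -> Jt J -> k) :
  homog w N.+1 -> (2 <= N)%N -> rspan w coord ->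
  (forall t : tns k n 'I_n, zeroA w (ext (@d2s k n w J) t) ->
     exists s : tns k n unit, eqA w t (ext (@d1s k n) s))
    -> #|J| = n.
Proof.
move=> hw N2 hs H; case: (eqVneq #|J| n) => [//|/eqP cJ]; exfalso.
have [i0 iJ] := notin_of_card cJ.
pose t : tns k n 'I_n := tsimp (ncone k n) i0 (ncone k n) ++
   flatten [seq tscale (- coord i0 l) (tsimp (ncone k n) (val l) (ncone k n)) | l : Jt J].
have key : forall G : word n * 'I_n * word n -> k,
    Gf G t = G ([::], i0, [::]) + \sum_(l : Jt J) (- coord i0 l) * G ([::], val l, [::]).
  move=> G; rewrite /t Gf_cat Gf_unit Gf_image; congr (_ + _); apply: eq_bigr => l _.
  by rewrite Gf_tscale Gf_unit.
have Zt : zeroA w (ext (d2s w J) t).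
  exists [::]; apply: Gf_teq => g; rewrite Gf_nil Gf_ext key.
  cbv beta delta [fst snd] iota.
  rewrite (Gf_d2s_lin _ i0 hs) -big_split big1 // => l _.
  by rewrite /= mulNr addrN.
have [s Hs] := H t Zt.
pose G := fun s : word n * 'I_n * word n =>
  if (s.1.1 == [::]) && (s.1.2 == i0) && (s.2 == [::]) then (1 : k) else 0.
have Z := zeroA_Gf (g := G) Hs
   (fun gg => genK_kill gg hw N2 (@kill_lem k n _ [::] [::] i0 is_true_true is_true_true)).
move: Z; rewrite Gf_cat Gf_tscale key Gf_ext.
rewrite (@Gf_eq _ _ _ (fun _ => 0)); last first.
  move=> [[x []] y] /=; rewrite Gf_d1s big1 // => i _.
  have ne : forall x' : word n, (x' ++ [:: i] == [::]) = false by case.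
  have ne2 : (i :: y == [::]) = false by [].
  by rewrite /G /= ne ne2 /= ?andbF ?subrr.
rewrite Gf0 mulr0 addr0 big1; last first.
  move=> l _; rewrite /G /=.
  have -> : (val l == i0) = false by apply/negP => /eqP e; rewrite -e (valP l) in iJ.
  by rewrite /= mulr0.
by rewrite /G /= !eqxx /= addr0 => /eqP; rewrite oner_eq0.
Qed.

Theorem proposition2p4 (k : fieldType) (n N : nat) (w : nc k n)
    (J : {set 'I_n}) (coord : 'I_n -> Jt J -> k) :
  [pchar k] =i pred0 -> (0 < n)%N -> (2 <= N)%N ->
  homog w N.+1 -> ~ nceq w [::] ->
  @rspan k n w J coord -> rindep w J ->
  [/\ (* (i) f_1 o d_2 = d_2^* o f_2 on A(x)R(x)A *)
      forall t : tns k n (Jt J),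
        eqA w (ext (@f1 k n J) (ext (@d2 k n w J) t)) (ext (@d2s k n w J) (ext (@f2 k n J) t)),
      (* (ii) f_2 o d_3 = d_1^* o f_3 iff dim R = n *)
      (forall t : tns k n unit,
         eqA w (ext (@f2 k n J) (ext (@d3 k n J coord) t)) (ext (@d1s k n) (ext (@f3 k n) t)))
        <-> #|J| = n,
      (* f_0 o d_1 = d_3^* o f_1 iff dim R = n *)
      (forall t : tns k n 'I_n,
         eqA w (ext (@f0 k n) (ext (@d1 k n) t)) (ext (@d3s k n J coord) (ext (@f1 k n J) t)))
        <-> #|J| = n
    & (* (iii) exactness of C_w^vee at A(x)V^*(x)A implies dim R = n *)
      (forall t : tns k n 'I_n, zeroA w (ext (@d2s k n w J) t) ->
         exists s : tns k n unit, eqA w t (ext (@d1s k n) s))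
        -> #|J| = n].
Proof.
move=> _ _ N2 hw _ hs hi; split.
- exact: part_i.
- exact: part_iia hw N2 hs hi.
- exact: part_iib hw N2.
- exact: part_iii hw N2 hs.
Qed.
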